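(* Let $v,w\in\mathbb C$, let $u\in\mathbb C$ satisfy $u^2=w$, and set $A=-\mathrm{Re}(v)$, $B=-\mathrm{Im}(u)$, $C=-\mathrm{Im}(v)$, $D=\mathrm{Re}(u)$, and assume $BC-AD\neq0$. Let $\Gamma=\{-v(1-\tau)^2\pm2\sqrt{-w(1-(1-\tau)^2)(1-\tau)^2}:\tau\in[0,1]\}$, which is an ellipse passing through the origin. Then the foci of $\Gamma$ are the two roots of $z^2+vz+w$, i.e. the two roots of $Q(z)=z(z^2+vz+w)$ different from the origin. *)

(* Defs.v *)
From mathcomp Require Import all_boot all_order all_algebra.
From mathcomp Require Import reals.
From mathcomp.real_closed Require Export complex.

Set Implicit Arguments.
Unset Strict Implicit.
Unset Printing Implicit Defensive.

Import Order.TTheory GRing.Theory Num.Theory.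
Local Open Scope ring_scope.
Local Open Scope complex_scope.

(* The "+-" together with the square root means: both square roots y of the
   radicand are allowed, i.e. the points -v(1-tau)^2 + 2y with
   y^2 = -w(1-(1-tau)^2)(1-tau)^2. *)
Definition Gamma (R : realType) (v w : R[i]) : R[i] -> Prop :=
  fun z => exists tau : R, 0 <= tau <= 1 /\
    exists y : R[i],
      y ^+ 2 = - w * (1 - ((1 - tau)%:C) ^+ 2) * ((1 - tau)%:C) ^+ 2 /\
      z = - v * ((1 - tau)%:C) ^+ 2 + 2%:R * y.

(* E is a (non-degenerate) ellipse with foci f1 and f2: E is the set of
   points whose distances to f1 and f2 sum to a constant r > |f1 - f2|.
   (The foci of a non-degenerate ellipse are uniquely determined.) *)
Definition ellipse_with_foci (R : realType) (E : R[i] -> Prop) (f1 f2 : R[i]) : Prop :=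
  exists r : R,  (* `|.| is the complex modulus, real-valued in R[i] *)
    `|f1 - f2| < r%:C /\
    forall z : R[i], E z <-> `|z - f1| + `|z - f2| = r%:C.

(* Main.v *)
Require Import Defs.
From mathcomp Require Import all_boot all_order all_algebra.
From mathcomp Require Import reals.
From mathcomp.real_closed Require Import complex.
From mathcomp Require Import ring lra.
Import Order.TTheory GRing.Theory Num.Theory.
Local Open Scope ring_scope.

Lemma lin_comb (R : fieldType) (L Rr A B k : R) : A = B -> L - Rr = k * (A - B) -> L = Rr.
Proof. by move=> -> /eqP; rewrite subrr mulr0 subr_eq0 => /eqP. Qed.

Section Core.
Variable R : rcfType.
Variables a1 a2 b1 b2 e1 e2 : R.
Hypothesis HX : e1^+2 - e2^+2 = a1^+2 - a2^+2 + b1^+2 - b2^+2.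
Hypothesis HY : e1*e2 = a1*a2 + b1*b2.

Let R2 := 2 * (a1^+2 + a2^+2 + b1^+2 + b2^+2 + (e1^+2 + e2^+2)).

Lemma fact1 : (e1^+2+e2^+2)^+2 = (a1^+2 - a2^+2 + b1^+2 - b2^+2)^+2 + 4 * (a1*a2 + b1*b2)^+2.
Proof. rewrite -HX -HY. ring. Qed.

Lemma fact2 : R2 * (R2 - 4 * (e1^+2+e2^+2)) = 16 * (a1*b2 - a2*b1)^+2.
Proof.
rewrite /R2.
have -> : 2 * (a1 ^+ 2 + a2 ^+ 2 + b1 ^+ 2 + b2 ^+ 2 + (e1 ^+ 2 + e2 ^+ 2)) *
  (2 * (a1 ^+ 2 + a2 ^+ 2 + b1 ^+ 2 + b2 ^+ 2 + (e1 ^+ 2 + e2 ^+ 2)) - 4 * (e1 ^+ 2 + e2 ^+ 2))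
  = 4 * (a1 ^+ 2 + a2 ^+ 2 + b1 ^+ 2 + b2 ^+ 2)^+2 - 4 * (e1^+2+e2^+2)^+2 by ring.
rewrite fact1; ring.
Qed.

Lemma core_lt : a1*b2 - a2*b1 != 0 -> 4 * (e1^+2+e2^+2) < R2.
Proof.
move=> HD.
have h := fact2.
have hD : 0 < (a1*b2 - a2*b1)^+2 by rewrite lt_neqAle sqr_ge0 andbT eq_sym sqrf_eq0.
have hE : 0 <= e1^+2+e2^+2 by rewrite addr_ge0 ?sqr_ge0.
have hR : 0 <= R2 by rewrite /R2 mulr_ge0 // !addr_ge0 ?sqr_ge0.
nra.
Qed.

Lemma core_fwd c s : c^+2 + s^+2 = 1 ->
  Num.sqrt ((a1*c+b1*s - e1)^+2 + (a2*c+b2*s - e2)^+2)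
  + Num.sqrt ((a1*c+b1*s + e1)^+2 + (a2*c+b2*s + e2)^+2) = Num.sqrt R2.
Proof.
move=> hc.
have hc0 : c^+2 + s^+2 - 1 = 0 by rewrite hc subrr.
set P1 := a1*c+b1*s; set P2 := a2*c+b2*s.
set Q1 := - a1 * s + b1 * c; set Q2 := - a2 * s + b2 * c.
set d1 := (X in Num.sqrt X + _).
set d2 := (X in _ + Num.sqrt X).
have hd1 : 0 <= d1 by rewrite /d1 addr_ge0 ?sqr_ge0.
have hd2 : 0 <= d2 by rewrite /d2 addr_ge0 ?sqr_ge0.
have hprod : d1 * d2 = (Q1^+2 + Q2^+2)^+2.
  have -> : d1 * d2 = (P1^+2 - P2^+2 - (e1^+2 - e2^+2))^+2 + (2*P1*P2 - 2*(e1*e2))^+2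
    by rewrite /d1 /d2; ring.
  rewrite HX HY.
  have -> : P1 ^+ 2 - P2 ^+ 2 - (a1 ^+ 2 - a2 ^+ 2 + b1 ^+ 2 - b2 ^+ 2)
    = - (Q1^+2 - Q2^+2) + (a1 ^+ 2 - a2 ^+ 2 + b1 ^+ 2 - b2 ^+ 2) * (c^+2 + s^+2 - 1)
    by rewrite /P1 /P2 /Q1 /Q2; ring.
  have -> : 2 * P1 * P2 - 2 * (a1 * a2 + b1 * b2)
    = - (2 * Q1 * Q2) + 2 * (a1 * a2 + b1 * b2) * (c^+2 + s^+2 - 1)
    by rewrite /P1 /P2 /Q1 /Q2; ring.
  rewrite hc0 !mulr0 !addr0; ring.
have hsum : d1 + d2 + 2 * (Q1^+2 + Q2^+2) = R2.
  have -> : d1 + d2 + 2 * (Q1^+2 + Q2^+2) = 2 * (e1^+2 + e2^+2) +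
     2 * (a1 ^+ 2 + a2 ^+ 2 + b1 ^+ 2 + b2 ^+ 2) * (c^+2 + s^+2)
    by rewrite /d1 /d2 /P1 /P2 /Q1 /Q2; ring.
  by rewrite hc /R2; ring.
have hS : 0 <= Num.sqrt d1 + Num.sqrt d2 by rewrite addr_ge0 ?sqrtr_ge0.
rewrite -(ger0_norm hS) -sqrtr_sqr; congr Num.sqrt.
rewrite -hsum sqrrD !sqr_sqrtr // -sqrtrM // hprod sqrtr_sqr ger0_norm ?addr_ge0 ?sqr_ge0 //.
ring.
Qed.

Lemma sq_sum_aux (s1 s2 d1 d2 r : R) : s1^+2 = d1 -> s2^+2 = d2 -> (s1+s2)^+2 = r ->
  r^+2 - 2*r*(d1+d2) + (d1-d2)^+2 = 0.
Proof. move=> <- <- <-; ring. Qed.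

Lemma core_bwd P1 P2 : a1*b2 - a2*b1 != 0 ->
  Num.sqrt ((P1 - e1)^+2 + (P2 - e2)^+2) + Num.sqrt ((P1 + e1)^+2 + (P2 + e2)^+2)
  = Num.sqrt R2 ->
  exists c s, c^+2 + s^+2 = 1 /\ P1 = a1*c+b1*s /\ P2 = a2*c+b2*s.
Proof.
move=> HD hS.
set D := a1*b2 - a2*b1 in HD.
set c := (P1*b2 - P2*b1) / D.
set s := (a1*P2 - a2*P1) / D.
have hP1 : P1 = a1*c+b1*s by rewrite /c /s /D; field; done.
have hP2 : P2 = a2*c+b2*s by rewrite /c /s /D; field; done.
exists c, s; split=> //.
have hR : 0 <= R2 by rewrite /R2 mulr_ge0 // !addr_ge0 ?sqr_ge0.
have F := @sq_sum_aux _ _ _ _ _ (sqr_sqrtr (addr_ge0 (sqr_ge0 (P1 - e1)) (sqr_ge0 (P2-e2))))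
   (sqr_sqrtr (addr_ge0 (sqr_ge0 (P1 + e1)) (sqr_ge0 (P2+e2)))) (etrans (congr1 (fun x => x^+2) hS) (sqr_sqrtr hR)).
have hsum : (P1 - e1) ^+ 2 + (P2 - e2) ^+ 2 + ((P1 + e1) ^+ 2 + (P2 + e2) ^+ 2)
   = 2 * (P1^+2 + P2^+2) + 2 * (e1^+2 + e2^+2) by ring.
have hdiff : ((P1 - e1) ^+ 2 + (P2 - e2) ^+ 2 - ((P1 + e1) ^+ 2 + (P2 + e2) ^+ 2))^+2
   = 8 * (e1^+2 + e2^+2) * (P1^+2 + P2^+2) + 8 * (e1^+2 - e2^+2) * (P1^+2 - P2^+2)
     + 32 * (e1 * e2) * (P1 * P2) by ring.
rewrite hsum hdiff HX HY in F.
have step1 : R2 ^+ 2 - 2 * R2 * (2 * (P1 ^+ 2 + P2 ^+ 2) + 2 * (e1 ^+ 2 + e2 ^+ 2)) +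
       (8 * (e1 ^+ 2 + e2 ^+ 2) * (P1 ^+ 2 + P2 ^+ 2) +
        8 * (a1 ^+ 2 - a2 ^+ 2 + b1 ^+ 2 - b2 ^+ 2) * (P1 ^+ 2 - P2 ^+ 2) +
        32 * (a1 * a2 + b1 * b2) * (P1 * P2))
   = 4 * (a1^+2 + a2^+2 + b1^+2 + b2^+2)^+2 - 4 * (e1^+2+e2^+2)^+2
     - 8 * (a1^+2 + a2^+2 + b1^+2 + b2^+2) * (P1 ^+ 2 + P2 ^+ 2)
     + 8 * (a1 ^+ 2 - a2 ^+ 2 + b1 ^+ 2 - b2 ^+ 2) * (P1 ^+ 2 - P2 ^+ 2) +
        32 * (a1 * a2 + b1 * b2) * (P1 * P2) by rewrite /R2; ring.
rewrite step1 fact1 hP1 hP2 in F.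
have : 16 * D^+2 * (1 - (c^+2 + s^+2)) = 0.
  by rewrite -F /D; ring.
move/eqP; rewrite !mulf_eq0 => /orP [/orP [|]|].
- by rewrite pnatr_eq0.
- by rewrite ?sqrf_eq0 ?mulf_eq0 ?(negbTE HD).
- by rewrite subr_eq0 => /eqP <-.
Qed.
End Core.

Lemma Gamma_param (R : realType) (z1 z2 u z : R[i]) : u^+2 = z1*z2 ->
  Gamma (-(z1+z2)) (z1*z2) z <-> exists c s : R, c^+2 + s^+2 = 1 /\
    z = (z1+z2)*(((1-c)/2)%:C)%C + 'i%C * u * (s%:C)%C.
Proof.
move=> Hu; split.
- case=> tau [/andP [ht0 ht1]] [Y [hY hz]].
  set t := 1 - tau in hY hz.
  have t0 : 0 <= t by rewrite /t; lra.
  have t1 : t <= 1 by rewrite /t; lra.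
  have h1t : 0 <= 1 - t^+2 by nra.
  clearbody t.
  set k := t * Num.sqrt (1 - t^+2).
  have hk : k^+2 = t^+2 * (1 - t^+2) by rewrite /k exprMn sqr_sqrtr.
  have hfac : (Y - 'i%C * u * (k%:C)%C) * (Y + 'i%C * u * (k%:C)%C) = 0.
    rewrite (_ : (Y - 'i%C * u * (k%:C)%C) * (Y + 'i%C * u * (k%:C)%C)
       = Y^+2 - ('i%C ^+2) * u^+2 * ((k%:C)%C)^+2); last by ring.
    rewrite sqr_i hY Hu -[((k%:C)%C)^+2]rmorphXn hk rmorphM rmorphB rmorph1 rmorphXn.
    ring.
  have main : forall eps : R, eps^+2 = 1 -> Y = 'i%C * u * ((eps * k)%:C)%C ->
      exists c s : R, c^+2 + s^+2 = 1 /\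
       z = (z1+z2)*(((1-c)/2)%:C)%C + 'i%C * u * (s%:C)%C.
    move=> eps he hYe; exists (1 - 2 * t^+2), (2 * (eps * k)); split.
      rewrite (_ : (2 * (eps * k))^+2 = 4 * eps^+2 * k^+2); last by ring.
      rewrite he hk; ring.
    rewrite hz hYe (_ : (1 - (1 - 2 * t ^+ 2)) / 2 = t^+2); last by field; done.
    rewrite rmorphXn !rmorphM rmorph_nat; ring.
  move/eqP: hfac; rewrite mulf_eq0 => /orP [|].
  + rewrite subr_eq0 => /eqP hYe; apply: (main 1); first by rewrite expr1n.
    by rewrite mul1r.
  + rewrite addr_eq0 => /eqP hYe; apply: (main (-1)); first by rewrite sqrrN expr1n.
    by rewrite mulN1r rmorphN mulrN.
- case=> c [s [hcs hz]].
  have hc1 : -1 <= c <= 1 by apply/andP; split; nra.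
  case/andP: hc1 => hc0 hc1.
  have hS0 : 0 <= (1 - c)/2 by lra.
  set t := Num.sqrt ((1 - c)/2).
  have ht2 : t^+2 = (1 - c)/2 by rewrite sqr_sqrtr.
  have t0 : 0 <= t by apply: sqrtr_ge0.
  have t1 : t <= 1 by nra.
  exists (1 - t); split.
    apply/andP; split; lra.
  exists ('i%C * u * ((s/2)%:C)%C); split.
    have hs2 : s^+2 = 1 - c^+2 by rewrite -hcs; ring.
    have e1 : 1 - (1 - t) = t by ring.
    rewrite e1 (_ : ('i%C * u * ((s/2)%:C)%C)^+2 = 'i%C^+2 * u^+2 * (((s/2)^+2)%:C)%C);
      last by rewrite rmorphXn; ring.
    rewrite sqr_i Hu (_ : (s/2)^+2 = (1 - t^+2) * t^+2); last first.
      rewrite ht2 (_ : (s/2)^+2 = s^+2 / 4); last by field; done.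
      by rewrite hs2; field; done.
    by rewrite rmorphM rmorphB rmorph1 rmorphXn; ring.
  have e1 : 1 - (1 - t) = t by ring.
  rewrite e1 hz -ht2 rmorphXn.
  rewrite (_ : (s%:C)%C = 2%:R * ((s/2)%:C)%C); first by ring.
  by rewrite -(rmorph_nat (real_complex R) 2) -rmorphM; congr (_ %:C)%C; field; done.
Qed.
Theorem lemma2p3 (R : realType) (v w u : R[i]) :
  u ^+ 2 = w ->
  (- complex.Im u) * (- complex.Im v) - (- complex.Re v) * (complex.Re u) != 0 ->
  Gamma v w 0 /\
  forall z1 z2 : R[i],
    (forall z : R[i], z ^+ 2 + v * z + w = (z - z1) * (z - z2)) ->
    ellipse_with_foci (Gamma v w) z1 z2.
Proof.
move=> Hu Hdet; split.
  exists 1; split; first by rewrite ler01 lexx.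
  exists 0; rewrite subrr rmorph0; split; ring.
move=> z1 z2 Hz.
have Hw : w = z1 * z2.
  have h := Hz 0; rewrite expr0n /= mulr0 !add0r in h; rewrite h; ring.
have Hv : v = - (z1 + z2).
  have h := Hz 1; rewrite Hw expr1n mulr1 in h.
  apply/eqP; rewrite -subr_eq0; apply/eqP.
  rewrite (_ : v - - (z1 + z2) = (1 + v + z1 * z2) - (1 - z1) * (1 - z2)); last by ring.
  by rewrite h subrr.
subst v w.
rewrite /ellipse_with_foci.
have Hu1 := congr1 (@complex.Re R) Hw.
have Hu2 := congr1 (@complex.Im R) Hw.
move: Hdet Hu1 Hu2 Hz.
case: z1 Hw => [p1 q1]; case: z2 => [p2 q2]; case: u => [u1 u2] Hu /=.
move=> Hdet Hu1 Hu2 _.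
rewrite Hu.
pose a1 := -(p1+p2)/2; pose a2 := -(q1+q2)/2; pose b1 := -u2; pose b2 := u1.
pose e1 := (p1-p2)/2; pose e2 := (q1-q2)/2.
have HX : e1^+2 - e2^+2 = a1^+2 - a2^+2 + b1^+2 - b2^+2.
  apply: (@lin_comb _ _ _ _ _ 1 Hu1); rewrite /a1 /a2 /b1 /b2 /e1 /e2; field; done.
have HY : e1*e2 = a1*a2 + b1*b2.
  apply: (@lin_comb _ _ _ _ _ (1/2) Hu2); rewrite /a1 /a2 /b1 /b2 /e1 /e2; field; done.
have HD : a1*b2 - a2*b1 != 0.
  move: Hdet; apply: contra => /eqP h; apply/eqP.
  rewrite (_ : - u2 * - - (q1 + q2) - - - (p1 + p2) * u1 = 2 * (a1*b2 - a2*b1)).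
    by rewrite h mulr0.
  rewrite /a1 /a2 /b1 /b2; field; done.
have Hlt := @core_lt _ _ _ _ _ _ _ HX HY HD.
have HE : 0 <= e1^+2 + e2^+2 by rewrite addr_ge0 ?sqr_ge0.
set R2e := 2 * _ in Hlt.
have HR : 0 < R2e by lra.
exists (Num.sqrt R2e); split.
  rewrite normc_def /= ltcR ltr_sqrt //.
  rewrite (_ : (p1 - p2)^+2 + (q1 - q2)^+2 = 4 * (e1^+2 + e2^+2)) //.
  rewrite /e1 /e2; field; done.
move=> [x y]; rewrite (@Gamma_param _ _ _ _ _ Hu) !normc_def /= -rmorphD; split.
  case=> c [s [hcs hz]].
  have hzx := congr1 (@complex.Re R) hz; have hzy := congr1 (@complex.Im R) hz.
  simpl in hzx, hzy.
  congr (_ %:C)%C.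
  rewrite (_ : x - p1 = a1*c+b1*s - e1); last by rewrite hzx /a1 /b1 /e1; field; done.
  rewrite (_ : y - q1 = a2*c+b2*s - e2); last by rewrite hzy /a2 /b2 /e2; field; done.
  rewrite (_ : x - p2 = a1*c+b1*s + e1); last by rewrite hzx /a1 /b1 /e1; field; done.
  rewrite (_ : y - q2 = a2*c+b2*s + e2); last by rewrite hzy /a2 /b2 /e2; field; done.
  exact: core_fwd.
move/(congr1 (@complex.Re R)) => /= hS.
rewrite (_ : x - p1 = (x - (p1+p2)/2) - e1) in hS; last by rewrite /e1; field; done.
rewrite (_ : y - q1 = (y - (q1+q2)/2) - e2) in hS; last by rewrite /e2; field; done.
rewrite (_ : x - p2 = (x - (p1+p2)/2) + e1) in hS; last by rewrite /e1; field; done.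
rewrite (_ : y - q2 = (y - (q1+q2)/2) + e2) in hS; last by rewrite /e2; field; done.
have [c [s [hcs [h1 h2]]]] := @core_bwd _ _ _ _ _ _ _ HX HY _ _ HD hS.
exists c, s; split => //.
apply/eqP; rewrite eq_complex /=; apply/andP; split; apply/eqP.
  move: h1; rewrite /a1 /b1 => h1.
  rewrite (_ : x = (x - (p1 + p2) / 2) + (p1+p2)/2); last by field; done.
  rewrite h1; field; done.
move: h2; rewrite /a2 /b2 => h2.
rewrite (_ : y = (y - (q1 + q2) / 2) + (q1+q2)/2); last by field; done.
rewrite h2; field; done.
Qed.
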